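(* An $r$-partite partition $\boldsymbol\lambda=(\lambda^0\mid\lambda^1\mid\cdots\mid\lambda^{r-1})$ of size $n$ is the cycle type of an absolute square in $G(r,1,n)$ (an element of the form $\pi\overline{\pi}$ with $\pi\in G(r,1,n)$) if and only if: (1) each even part of $\lambda^0$ has even multiplicity; (2) $\lambda^t=\lambda^{r-t}$ for all $1\le t<r/2$; and (3) when $r$ is even, each part of $\lambda^{r/2}$ has even multiplicity.
   Context: $G(r,1,n)=\{(z_1,\dots,z_n;\sigma):z_i\in\mathbb{Z}_r,\sigma\in S_n\}$ with product $(z;\sigma)(z';\sigma')=(z_1+z'_{\sigma^{-1}(1)},\dots,z_n+z'_{\sigma^{-1}(n)};\sigma\sigma')$. The bar operation is $\overline{(z_1,\dots,z_n;\sigma)}=(-z_1,\dots,-z_n;\sigma)$. The color of a cycle $(u_1,\dots,u_\ell)$ of $\sigma$ is $z_{u_1}+\cdots+z_{u_\ell}\in\mathbb{Z}_r$; the cycle type of $(z;\sigma)$ is $(\lambda^0\mid\cdots\mid\lambda^{r-1})$ where $\lambda^j$ is the partition of the lengths of cycles of color $j$. *)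

(* Defs.v *)
From HB Require Import structures.
From mathcomp Require Import all_boot all_order all_algebra all_fingroup.
Set Implicit Arguments. Unset Strict Implicit. Unset Printing Implicit Defensive.
Import GRing.Theory.
Local Open Scope ring_scope.

(* Z_r, for r > 0, as 'I_r (written 'I_(r.-1.+1) to get its Zmodule structure). *)
Definition Zr (r : nat) := 'I_(r.-1.+1).

Definition Grn (r n : nat) := ({ffun 'I_n -> Zr r} * {perm 'I_n})%type.

(* (z;s)(z';s') = (z_i + z'_{s^{-1} i} ; s o s').
   In mathcomp, (s' * s)%g x = s (s' x), i.e. it is s o s'. *)
Definition gmul (r n : nat) (x y : Grn r n) : Grn r n :=
  ([ffun i => x.1 i + y.1 ((x.2)^-1%g i)], (y.2 * x.2)%g).

Definition gbar (r n : nat) (x : Grn r n) : Grn r n :=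
  ([ffun i => - x.1 i], x.2).

Definition cycle_color (r n : nat) (x : Grn r n) (C : {set 'I_n}) : nat :=
  nat_of_ord (\sum_(i in C) x.1 i).

Definition cycle_type (r n : nat) (x : Grn r n) : seq (seq nat) :=
  [seq sort geq [seq #|C| | C : {set 'I_n} <- enum (porbits x.2) & (cycle_color x C == j)%N]
  | j <- iota 0 r].

Definition is_partition (l : seq nat) : bool :=
  sorted geq l && all (fun k => 0 < k)%N l.

Definition rpartition (r n : nat) (lam : seq (seq nat)) : bool :=
  [&& size lam == r, all is_partition lam & sumn (map sumn lam) == n].

(* Main.v *)
Require Import Defs.
From HB Require Import structures.
From mathcomp Require Import all_boot all_order all_algebra all_fingroup.
From mathcomp Require Import zify.
Set Implicit Arguments. Unset Strict Implicit. Unset Printing Implicit Defensive.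
Import GRing.Theory.

Section PermFacts.
Variable T : finType.
Implicit Types (p : {perm T}) (x y : T).

Lemma iter_mul_orbit p x q : iter (q * #|porbit p x|) p x = x.
Proof.
elim: q => [|q IH] //=; by rewrite mulSn iterD IH iter_porbit.
Qed.

Lemma expg_mod p x a : (p ^+ a)%g x = (p ^+ (a %% #|porbit p x|))%g x.
Proof.
rewrite !permX {1}(divn_eq a #|porbit p x|) addnC iterD iter_mul_orbit //.
Qed.

Lemma expg_eq_mod p x a b : (p ^+ a)%g x = (p ^+ b)%g x ->
  a %% #|porbit p x| = b %% #|porbit p x|.
Proof.
rewrite (expg_mod p x a) (expg_mod p x b) !permX.
have m0 : 0 < #|porbit p x| by rewrite lt0n card_porbit_neq0.
have U := uniq_traject_porbit p x.
rewrite -(nth_traject p (ltn_pmod a m0)) -(nth_traject p (ltn_pmod b m0)) => E.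
by apply/eqP; rewrite -(nth_uniq x _ _ U) ?size_traject ?ltn_pmod // E.
Qed.

End PermFacts.

Lemma even_inv (T : finType) (g : T -> T) (A : {set T}) :
  {in A, forall x, g x \in A} -> {in A, forall x, g (g x) = x} ->
  {in A, forall x, g x != x} -> ~~ odd #|A|.
Proof.
move: {2}#|A| (leqnn #|A|) => m; elim: m A => [|m IH] A.
  by rewrite leqn0 => /eqP ->.
move=> hm hA hinv hfix.
case: (set_0Vmem A) => [->|[x xA]]; first by rewrite cards0.
have gxA := hA x xA.
have gxx := hfix x xA.
have gxA' : g x \in A :\ x by rewrite !inE gxx.
have E : #|A| = (#|A :\ x :\ g x|).+2.
  by rewrite (cardsD1 x A) xA (cardsD1 (g x) (A :\ x)) gxA'.
rewrite E /= !negbK.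
have HH : forall y, y \in A :\ x :\ g x -> g y \in A :\ x :\ g x.
  move=> y; rewrite !inE => /and3P[ygx yx yA].
  rewrite hA // andbT; apply/andP; split.
    by apply: contra yx => /eqP E'; rewrite -(hinv y yA) E' hinv.
  by apply: contra ygx => /eqP <-; rewrite hinv.
apply: IH.
- by move: hm; rewrite E ltnS => /ltnW.
- exact: HH.
- by move=> y; rewrite !inE => /and3P[_ _ yA]; apply: hinv.
- by move=> y; rewrite !inE => /and3P[_ _ yA]; apply: hfix.
Qed.
Lemma sum_bool_card (T : finType) (A : {set T}) (b : pred T) :
  \sum_(x in A) (b x : nat) = #|[set x in A | b x]|.
Proof.
rewrite -sum1_card big_mkcond [RHS]big_mkcond /=; apply: eq_bigr => x _.
by rewrite inE; case: (x \in A); case: (b x).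
Qed.

Section General.
Variables (r n : nat) (z : {ffun 'I_n -> 'I_r.+1}) (s : {perm 'I_n}).
Local Notation t := (s * s)%g.

Definition w i : 'I_r.+1 := (z i - z (s^-1%g i))%R.
Definition colw (C : {set 'I_n}) : 'I_r.+1 := (\sum_(i in C) w i)%R.
Definition Sz (C : {set 'I_n}) : 'I_r.+1 := (\sum_(i in C) z i)%R.

Lemma tX i : (t ^+ i)%g = (s ^+ (i.*2))%g.
Proof.
elim: i => [|i IH]; first by rewrite !expg0.
by rewrite expgS IH doubleS !expgS mulgA.
Qed.

Lemma tXs i x : s ((t ^+ i)%g x) = (t ^+ i)%g (s x).
Proof. by rewrite -!permM tX -expgS -expgSr. Qed.

Lemma B1 x : [set s y | y in porbit t x] = porbit t (s x).
Proof.
apply/setP=> y; apply/imsetP/porbitP.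
  by move=> [u /porbitP [i ->] ->]; exists i; rewrite tXs.
by move=> [i ->]; exists ((t ^+ i)%g x); rewrite ?mem_porbit // tXs.
Qed.

Lemma B2 x : porbit t (s (s x)) = porbit t x.
Proof. by have := porbit_perm t 1 x; rewrite expg1 permM. Qed.

Lemma B3 x : #|porbit t (s x)| = #|porbit t x|.
Proof. by rewrite -B1 card_imset //; exact: perm_inj. Qed.

Lemma Sz_img x : Sz (porbit t (s x)) = (\sum_(i in porbit t x) z (s i))%R.
Proof. by rewrite -B1 /Sz big_imset //= => u v _ _; apply: perm_inj. Qed.

Lemma colw_eq x : colw (porbit t x) = (Sz (porbit t x) - Sz (porbit t (s x)))%R.
Proof.
rewrite /colw /w sumrB; congr (_ - _)%R.
have -> : porbit t x = [set s y | y in porbit t (s x)] by rewrite B1 B2.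
rewrite big_imset /=; last by move=> u v _ _; apply: perm_inj.
by apply: eq_bigr => i _; rewrite permK.
Qed.

Lemma colwN x : colw (porbit t (s x)) = (- colw (porbit t x))%R.
Proof. by rewrite !colw_eq B2 opprB. Qed.

Lemma fixed_col x : porbit t (s x) = porbit t x -> colw (porbit t x) = 0%R.
Proof. by move=> E; rewrite colw_eq E subrr. Qed.

Lemma fixed_odd x : porbit t (s x) = porbit t x -> odd #|porbit t x|.
Proof.
move=> E; have : s x \in porbit t x by rewrite -E porbit_id.
move=> /porbitP [i Hi].
have : (t ^+ 1)%g x = (t ^+ (i + i))%g x.
  by rewrite expg1 permM Hi tXs Hi -permM -expgD.
move/expg_eq_mod.
case Ho: (odd #|porbit t x|) => //.
by move/(congr1 odd); rewrite !odd_mod ?addnn ?odd_double.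
Qed.

Lemma B6 x : porbit s x = porbit t x :|: porbit t (s x).
Proof.
apply/setP => y; rewrite inE; apply/porbitP/orP.
  move=> [i ->]; rewrite -(odd_double_half i).
  case: (odd i) => /=.
    by right; rewrite add1n expgS permM -tX mem_porbit.
  by left; rewrite add0n -tX mem_porbit.
case=> /porbitP [i ->].
  by exists i.*2; rewrite tX.
by exists (i.*2).+1; rewrite expgS permM tX.
Qed.

Lemma B8 x : porbit t (s x) = porbit t x -> porbit s x = porbit t x.
Proof. by move=> E; rewrite B6 E setUid. Qed.

Lemma porbit_disj x : porbit t (s x) != porbit t x ->
  [disjoint porbit t x & porbit t (s x)].
Proof.
move=> neq; rewrite -setI_eq0; apply/eqP/setP => y; rewrite !inE.
apply/negP => /andP[h1 h2]; move/negP: neq; apply.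
have e1 : porbit t y = porbit t x by apply/eqP; rewrite eq_porbit_mem.
have e2 : porbit t y = porbit t (s x) by apply/eqP; rewrite eq_porbit_mem.
by rewrite -e1 -e2.
Qed.

Lemma B7 x : porbit t (s x) != porbit t x -> #|porbit s x| = (#|porbit t x|).*2.
Proof.
move=> neq; have := cardsUI (porbit t x) (porbit t (s x)).
move: (porbit_disj neq); rewrite -setI_eq0 => /eqP ->.
by rewrite cards0 addn0 B3 addnn -B6.
Qed.

Lemma sum_orbit_const (G : {set 'I_n} -> nat) u :
  \sum_(y in porbit t u) G (porbit t y) = #|porbit t u| * G (porbit t u).
Proof.
rewrite -sum_nat_const; apply: eq_bigr => y yC.
by congr G; apply/eqP; rewrite eq_porbit_mem.
Qed.

Lemma Sz_single x (A : {set 'I_n}) :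
  (forall y, y \in porbit s x -> y != x -> z y = 0%R) -> A \subset porbit s x ->
  Sz A = if x \in A then z x else 0%R.
Proof.
move=> hz sub; rewrite /Sz; case: ifP => xA.
  rewrite (bigD1 x) //= big1 ?addr0 // => y /andP[yA yx].
  by apply: hz => //; apply: (subsetP sub).
apply: big1 => y yA; apply: hz; first exact: (subsetP sub).
by apply: contraFneq xA => <-.
Qed.

Definition Fkj k J (C : {set 'I_n}) : bool := (#|C| == k) && (colw C == J).

Lemma orbit_sum x k J :
  (forall y, y \in porbit s x -> y != x -> z y = 0%R) ->
  \sum_(y in porbit s x) Fkj k J (porbit t y) =
  if odd #|porbit s x| then #|porbit s x| * ((#|porbit s x| == k) && (0%R == J))
  else (#|porbit s x|)./2 * (((#|porbit s x|)./2 == k) && (z x == J)) +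
       (#|porbit s x|)./2 * (((#|porbit s x|)./2 == k) && ((- z x)%R == J)).
Proof.
move=> hz.
case E: (porbit t (s x) == porbit t x).
  move/eqP: E => E.
  rewrite (B8 E) fixed_odd // (sum_orbit_const (fun C => nat_of_bool (Fkj k J C))) /Fkj fixed_col //.
have neq : porbit t (s x) != porbit t x by rewrite E.
rewrite B7 // odd_double doubleK B6.
have -> : \sum_(y in porbit t x :|: porbit t (s x)) Fkj k J (porbit t y) =
   \sum_(y in porbit t x) Fkj k J (porbit t y) + \sum_(y in porbit t (s x)) Fkj k J (porbit t y).
  by rewrite -bigU ?porbit_disj //; apply: eq_bigl => i; rewrite !inE.
rewrite /= !(sum_orbit_const (fun C => nat_of_bool (Fkj k J C))) B3.
have subC : porbit t x \subset porbit s x by rewrite B6 subsetUl.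
have subC' : porbit t (s x) \subset porbit s x by rewrite B6 subsetUr.
have xC : x \in porbit t x by apply: porbit_id.
have xC' : x \notin porbit t (s x).
  by apply/negP => h; have := porbit_disj neq; rewrite disjoint_sym => /disjointFr/(_ h); rewrite xC.
have cC : colw (porbit t x) = z x.
  by rewrite colw_eq !(Sz_single hz) // xC (negbTE xC') subr0.
by rewrite /Fkj colwN cC B3.
Qed.


Definition Pset k J := [set C in porbits t | Fkj k J C].

Lemma points_count k J :
  \sum_(x : 'I_n) Fkj k J (porbit t x) = k * #|Pset k J|.
Proof.
rewrite (partition_big_imset (porbit t)) /= /Pset -sum_bool_card big_distrr /=.
apply: eq_bigr => _ /imsetP[y _ ->].
rewrite (eq_bigl (mem (porbit t y))); last first.
  by move=> i; rewrite /= eq_porbit_mem.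
rewrite (sum_orbit_const (fun C => nat_of_bool (Fkj k J C))) /Fkj.
by case: (#|porbit t y| =P k) => [->|] //=; rewrite !muln0.
Qed.


Lemma porbitsP (C : {set 'I_n}) : C \in porbits t -> exists y, C = porbit t y.
Proof. by move=> /imsetP[y _ ->]; exists y. Qed.

Lemma Pset_img (k : nat) (J : 'I_r.+1) : [set [set s x | x in C] | C : {set 'I_n} in Pset k J] \subset Pset k (- J)%R.
Proof.
apply/subsetP => _ /imsetP[C hC ->].
move: hC; rewrite !inE => /andP[/porbitsP[y ->] hF].
rewrite B1 imset_f //=.
by move: hF; rewrite /Fkj B3 colwN => /andP[-> /eqP ->] /=.
Qed.

Lemma Pset_card (k : nat) (J : 'I_r.+1) : #|Pset k J| = #|Pset k (- J)%R|.
Proof.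
have H : forall J', #|Pset k J'| <= #|Pset k (- J')%R|.
  move=> J'; rewrite -(card_imset _ (imset_inj (@perm_inj _ s))).
  exact: subset_leq_card (Pset_img k J').
by apply/eqP; rewrite eqn_leq H /= -{2}(opprK J) H.
Qed.

Lemma Pset_even (k : nat) (J : 'I_r.+1) : J = (- J)%R -> (J != 0%R) || ~~ odd k -> ~~ odd #|Pset k J|.
Proof.
move=> EJ hJ.
apply: (@even_inv _ (fun C : {set 'I_n} => [set s x | x in C])).

- move=> C hC; have := subsetP (Pset_img k J); rewrite -EJ; apply.
  exact: imset_f.
- move=> C; rewrite inE => /andP[/porbitsP[y ->] _].
  by rewrite !B1 B2.
- move=> C; rewrite inE => /andP[/porbitsP[y ->] hF].
  rewrite B1; apply/eqP => E.
  move: hF hJ; rewrite /Fkj fixed_col // => /andP[/eqP <- /eqP <-].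
  by rewrite eqxx fixed_odd.
Qed.

End General.

Lemma find_chunk (T : eqType) (chunks : seq (seq T)) i x :
  uniq (flatten chunks) -> i < size chunks -> x \in nth [::] chunks i ->
  find (fun c => x \in c) chunks = i.
Proof.
elim: chunks i => [|c chunks IH] [|i] //=; rewrite cat_uniq => /and3P[uc dis ucs] lt xin.
  by rewrite xin.
have xf : x \in flatten chunks by apply/flattenP; exists (nth [::] chunks i) => //; apply: mem_nth.
have -> : (x \in c) = false.
  apply/negP => xc; move/negP: dis; apply; apply/hasP; exists x => //.
by rewrite (IH i).
Qed.

Lemma uniq_chunk (T : eqType) (chunks : seq (seq T)) c :
  uniq (flatten chunks) -> c \in chunks -> uniq c.
Proof.
elim: chunks => [|c' chunks IH] //=; rewrite cat_uniq => /and3P[uc _ ucs].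
by rewrite inE => /orP[/eqP -> //|]; apply: IH.
Qed.

Lemma porbit_fconnect (T : finType) (p : {perm T}) x y :
  (y \in porbit p x) = fconnect p x y.
Proof.
apply/porbitP/idP => [[i ->]|h]; first by rewrite permX fconnect_iter.
by exists (findex p x y); rewrite permX iter_findex.
Qed.

Section Construction.
Variables (r n : nat) (B : seq (nat * 'I_r.+1)).
Hypotheses (HB0 : all (fun p => 0 < p.1) B) (HBn : sumn (map fst B) = n).

Definition chunks := reshape (map fst B) (enum 'I_n).

Lemma cs_flat : flatten chunks = enum 'I_n.
Proof. by rewrite reshapeKr // size_enum_ord HBn. Qed.

Lemma cs_shape : shape chunks = map fst B.
Proof. by rewrite reshapeKl // size_enum_ord HBn. Qed.

Lemma cs_uniq : uniq (flatten chunks).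
Proof. by rewrite cs_flat enum_uniq. Qed.

Lemma size_cs : size chunks = size B.
Proof. by rewrite -(size_map fst B) -cs_shape size_map. Qed.

Definition bx (x : 'I_n) := find (fun c => x \in c) chunks.
Definition chunk x := nth [::] chunks (bx x).

Lemma bx_spec x : bx x < size chunks /\ x \in chunk x.
Proof.
have : x \in flatten chunks by rewrite cs_flat mem_enum.
move/flattenP => [c cin xc].
have hh : has (fun c => x \in c) chunks by apply/hasP; exists c.
by split; [rewrite -has_find | apply: (nth_find [::] hh)].
Qed.

Lemma chunk_eq x y : y \in chunk x -> chunk y = chunk x.
Proof.
move=> yin; rewrite /chunk /bx; congr nth.
by apply: find_chunk cs_uniq (proj1 (bx_spec x)) yin.
Qed.

Lemma chunk_uniq x : uniq (chunk x).
Proof. by apply: (uniq_chunk cs_uniq); apply: mem_nth; case: (bx_spec x). Qed.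

Definition sigc0 x := next (chunk x) x.

Lemma sigc0_inj : injective sigc0.
Proof.
move=> x y E.
have hx : sigc0 x \in chunk x by rewrite mem_next; case: (bx_spec x).
have hy : sigc0 y \in chunk y by rewrite mem_next; case: (bx_spec y).
have Ec : chunk x = chunk y by rewrite -(chunk_eq hx) E (chunk_eq hy).
move: E; rewrite /sigc0 Ec => E.
by rewrite -(prev_next (chunk_uniq y) x) E prev_next // chunk_uniq.
Qed.

Definition sigc := perm sigc0_inj.

Lemma sigE x : sigc x = next (chunk x) x.
Proof. by rewrite permE. Qed.

Lemma porbit_chunk x : porbit sigc x =i chunk x.
Proof.
have fc : fcycle sigc (chunk x).
  have := cycle_next (chunk_uniq x).
  rewrite (@eq_in_cycle _ (mem (chunk x)) _ (frel sigc)) //.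
    by move=> u v uin _ /=; rewrite sigE (chunk_eq uin).
move=> y; rewrite porbit_fconnect (fconnect_cycle fc) //; by case: (bx_spec x).
Qed.

Lemma card_porbit_chunk x : #|porbit sigc x| = size (chunk x).
Proof. by rewrite (eq_card (porbit_chunk x)); apply/card_uniqP; apply: chunk_uniq. Qed.


Definition zf : {ffun 'I_n -> 'I_r.+1} :=
  [ffun x => if x == head x (chunk x) then (nth (0%N, 0%R) B (bx x)).2 else 0%R].

Definition Gk k (J : 'I_r.+1) (p : nat * 'I_r.+1) : nat :=
  let L := p.1 in
  if odd L then L * ((L == k) && (0%R == J))
  else L./2 * ((L./2 == k) && (p.2 == J)) + L./2 * ((L./2 == k) && ((- p.2)%R == J)).

Lemma total_count k J :
  \sum_(x : 'I_n) Fkj zf sigc k J (porbit (sigc * sigc)%g x) = \sum_(p <- B) Gk k J p.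
Proof.
rewrite -big_enum /= -cs_flat big_flatten /= (big_nth [::]) size_cs.
rewrite [RHS](big_nth (0%N, 0%R)) !big_mkord; apply: eq_bigr => [[b hb]] _ /=.
have hb' : b < size chunks by rewrite size_cs.
have sz : size (nth [::] chunks b) = (nth (0%N, 0%R) B b).1.
  by rewrite -(nth_map [::] 0%N size hb') -/(shape chunks) cs_shape (nth_map (0%N, 0%R)).
have pos : 0 < (nth (0%N, 0%R) B b).1 by apply: (all_nthP (0%N, 0%R) HB0).
have [h [c' Ec]] : exists h c', nth [::] chunks b = h :: c'.
  by move: sz pos; case: (nth [::] chunks b) => [|h c'] /=; [move=> <- | exists h, c'].
have hin : h \in nth [::] chunks b by rewrite Ec mem_head.
have bh : bx h = b by apply: find_chunk cs_uniq hb' hin.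
have chh : chunk h = nth [::] chunks b by rewrite /chunk bh.
rewrite big_uniq; last by rewrite -chh chunk_uniq.
rewrite (eq_bigl (mem (porbit sigc h))); last by move=> y; rewrite /= porbit_chunk chh.
rewrite orbit_sum.
  by rewrite card_porbit_chunk chh sz /Gk ffunE chh Ec /= eqxx bh.
move=> y; rewrite porbit_chunk => yin yh.
rewrite ffunE (chunk_eq yin) chh Ec /=.
by rewrite (negbTE yh).
Qed.

End Construction.

Lemma perm_eq_count (T : eqType) (s1 s2 : seq T) :
  (forall x, count_mem x s1 = count_mem x s2) -> perm_eq s1 s2.
Proof. by move=> H; apply/allP => x _; rewrite /= H. Qed.

Lemma count_enum_card (T : finType) (A : {set T}) (P : pred T) :
  count P (enum A) = #|[set x in A | P x]|.
Proof.
by rewrite -sum1_count big_enum_cond /= sum1_card; apply: eq_card => x; rewrite !inE.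
Qed.

Lemma geq_total : total geq. Proof. by move=> a b; rewrite leq_total. Qed.
Lemma geq_trans' : transitive geq. Proof. by move=> a b c h1 h2; apply: leq_trans h2 h1. Qed.
Lemma geq_anti : antisymmetric geq.
Proof. by move=> a b /andP[h1 h2]; apply: anti_leq; apply/andP; split; [exact: h2 | exact: h1]. Qed.

Section Link.
Variables (r n : nat) (pi : Grn r.+1 n).

Lemma ct_color C : cycle_color (gmul pi (gbar pi)) C = nat_of_ord (colw pi.1 pi.2 C).
Proof.
rewrite /cycle_color /colw /w; congr nat_of_ord; apply: eq_bigr => i _.
by rewrite /gmul /gbar /= !ffunE.
Qed.

Lemma ct_nth j (hj : j < r.+1) :
  nth [::] (cycle_type (gmul pi (gbar pi))) j =
  sort geq [seq #|C| | C : {set 'I_n} <- enum (porbits (pi.2 * pi.2)%g) & nat_of_ord (colw pi.1 pi.2 C) == j].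
Proof.
rewrite /cycle_type (nth_map 0%N) ?size_iota // nth_iota // add0n /=.
by congr (sort geq (map _ _)); apply: eq_filter => C; rewrite ct_color.
Qed.

Lemma ct_count j (hj : j < r.+1) k :
  count_mem k (nth [::] (cycle_type (gmul pi (gbar pi))) j) =
  #|Pset pi.1 pi.2 k (Ordinal hj)|.
Proof.
rewrite (ct_nth hj) (count_sort geq) count_map count_filter count_enum_card /Pset.
by apply: eq_card => C; rewrite !inE /Fkj.
Qed.

End Link.

Lemma forward r n (pi : Grn r.+1 n) :
  let lam := cycle_type (gmul pi (gbar pi)) in
  [/\ (forall k : nat, ~~ odd k -> ~~ odd (count_mem k (nth [::] lam 0))),
      (forall t : nat, (1 <= t)%N -> (t.*2 < r.+1)%N ->
          nth [::] lam t = nth [::] lam (r.+1 - t)) &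
      (~~ odd r.+1 -> forall k : nat, ~~ odd (count_mem k (nth [::] lam r.+1./2)))].
Proof.
move=> lam; split.
- move=> k hk; rewrite /lam (ct_count pi (ltn0Sn r)); apply: Pset_even.
    by apply: val_inj; rewrite /= subn0 modnn.
  by rewrite hk orbT.
- move=> t t1 t2.
  have ht : t < r.+1 by lia.
  have ht' : r.+1 - t < r.+1 by lia.
  rewrite /lam (ct_nth pi ht) (ct_nth pi ht').
  apply/(perm_sortP geq_total geq_trans' geq_anti); apply: perm_eq_count => k.
  rewrite -(count_sort geq) -(ct_nth pi ht) -[in RHS](count_sort geq) -(ct_nth pi ht') !ct_count.
  rewrite Pset_card; congr #|Pset _ _ _ _|; apply: val_inj => /=.
  by rewrite modn_small //; lia.
- move=> hr k.
  have E : (r.+1)./2.*2 = r.+1.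
    by have := odd_double_half r.+1; rewrite (negbTE hr).
  have hh : r.+1./2 < r.+1 by lia.
  rewrite /lam (ct_count pi hh); apply: Pset_even.
    by apply: val_inj => /=; rewrite modn_small; lia.
  apply/orP; left; apply/eqP => /(congr1 val) /=; lia.
Qed.

Lemma seq_pick (T : eqType) (s : seq T) (F : T -> nat) x :
  uniq s -> \sum_(y <- s) (y == x) * F y = (x \in s) * F x.
Proof.
move=> us; case: (boolP (x \in s)) => xs.
  rewrite (big_rem x) //= eqxx mul1n big1_seq ?addn0 // => y /andP[_].
  by rewrite rem_filter // mem_filter => /andP[/negbTE -> _].
by rewrite big1_seq // => y /andP[_ ys]; case: eqP ys xs => // -> ->.
Qed.

Lemma fin_pick (T : finType) (x : T) (F : T -> nat) :
  \sum_(y : T) (x == y) * F y = F x.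
Proof.
rewrite (bigD1 x) //= eqxx mul1n big1 ?addn0 // => y yx.
by rewrite eq_sym (negbTE yx).
Qed.

Lemma ord_pick N x (F : nat -> nat) : x < N -> \sum_(K < N) (x == K) * F K = F x.
Proof.
move=> h; rewrite (bigD1 (Ordinal h)) //= eqxx mul1n big1 ?addn0 // => K ne.
suff -> : (x == K) = false by [].
by apply/negbTE; apply: contra ne => /eqP e; apply/eqP/val_inj; rewrite /= e.
Qed.

Lemma mem_sumn (l : seq nat) x : x \in l -> x <= sumn l.
Proof.
elim: l => [|y l IH] //=; rewrite inE => /orP[/eqP ->|/IH h]; first exact: leq_addr.
by apply: leq_trans h _; apply: leq_addl.
Qed.

Lemma sumn_count (l : seq nat) N : all (fun x => x < N) l ->
  sumn l = \sum_(K < N) K * count_mem (K : nat) l.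
Proof.
elim: l => [|x l IH] /=; first by rewrite big1 // => K _; rewrite muln0.
move=> /andP[hx hl]; rewrite IH //.
under eq_bigr => K _ do rewrite mulnDr.
rewrite big_split /=; congr (_ + _).
under eq_bigr => K _ do rewrite mulnC.
by rewrite (ord_pick (fun K => K)).
Qed.

Lemma enum_pick2 (T : finType) (F : T -> nat) (J J' : T) :
  \sum_(t <- enum T) F t * ((t == J) + (t == J')) = F J + F J'.
Proof.
under eq_bigr => t _ do rewrite mulnDr [F t * (t == J)]mulnC [F t * (t == J')]mulnC.
by rewrite big_split /= !seq_pick ?enum_uniq // !mem_enum !mul1n.
Qed.

Section Comb.
Variables (r n : nat) (lam : seq (seq nat)).
Hypotheses (Hsize : size lam = r.+1) (Hpart : all is_partition lam)
  (Hsum : sumn (map sumn lam) = n).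

Definition mm k t := count_mem k (nth [::] lam t).

Definition aa k (t : 'I_r.+1) : nat :=
  if nat_of_ord t == 0 then (if odd k then 0 else (mm k 0)./2)
  else if (nat_of_ord t).*2 == r.+1 then (mm k t)./2
  else if (nat_of_ord t).*2 < r.+1 then mm k t else 0.

Definition blk k : seq (nat * 'I_r.+1) :=
  nseq (if odd k then mm k 0 else 0) (k, 0%R) ++
  flatten [seq nseq (aa k t) (k.*2, t) | t <- enum 'I_r.+1].

Definition Bl := flatten [seq blk k | k <- iota 1 n].

Definition gk K (J : 'I_r.+1) (p : nat * 'I_r.+1) : nat :=
  let L := p.1 in
  if odd L then nat_of_bool ((L == K) && (0%R == J))
  else ((L./2 == K) && (p.2 == J)) + ((L./2 == K) && ((- p.2)%R == J)).

Lemma Gk_gk K J p : Gk K J p = K * gk K J p.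
Proof.
rewrite /Gk /gk; case: (odd p.1).
  by case: (p.1 =P K) => [->|] //=; rewrite !muln0.
by case: (p.1./2 =P K) => [->|] //=; rewrite ?mulnDr // !muln0.
Qed.

Lemma lam_mem J x : J < r.+1 -> x \in nth [::] lam J -> 0 < x <= n.
Proof.
move=> hJ xin; apply/andP; split.
  have := all_nthP [::] Hpart J; rewrite Hsize => /(_ hJ) /andP[_ /allP]; apply.
  exact: xin.
rewrite -Hsum; apply: leq_trans (mem_sumn xin) _; apply: mem_sumn.
by apply: map_f; apply: mem_nth; rewrite Hsize.
Qed.

Lemma mm_out K J : J < r.+1 -> (K == 0) || (n < K) -> mm K J = 0.
Proof.
move=> hJ hK; apply/count_memPn/negP => /(lam_mem hJ); lia.
Qed.


Lemma blk_sum k K J : \sum_(p <- blk k) gk K J p =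
  (k == K) * ((if odd k then mm k 0 else 0) * (0%R == J) +
              \sum_(t <- enum 'I_r.+1) aa k t * ((t == J) + ((- t)%R == J))).
Proof.
rewrite /blk big_cat big_nseq iter_addn_0 big_flatten big_map /=.
under eq_bigr => t _ do rewrite big_nseq iter_addn_0.
rewrite /gk /=.
under eq_bigr => t _ do rewrite odd_double doubleK.
case: (k =P K) => [<-|nk] /=.
  rewrite mul1n; congr (_ + _).
    by case: (odd k); rewrite /= ?eqxx /= ?muln0 // mulnC.
  by apply: eq_bigr => t _; rewrite mulnC.
rewrite mul0n big1 ?addn0 => [|t _]; last by rewrite /= mul0n.
by case: (odd k); rewrite /= ?muln0.
Qed.


Hypotheses
  (c1 : forall k : nat, ~~ odd k -> ~~ odd (count_mem k (nth [::] lam 0)))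
  (c2 : forall t : nat, (1 <= t)%N -> (t.*2 < r.+1)%N ->
          nth [::] lam t = nth [::] lam (r.+1 - t))
  (c3 : ~~ odd r.+1 -> forall k : nat, ~~ odd (count_mem k (nth [::] lam r.+1./2))).

Lemma half_even m : ~~ odd m -> m./2 + m./2 = m.
Proof. by move=> h; rewrite addnn; have := odd_double_half m; rewrite (negbTE h). Qed.

Lemma E_eq K (J : 'I_r.+1) : 0 < K -> \sum_(p <- Bl) gk K J p = mm K J.
Proof.
move=> K0; rewrite /Bl big_flatten big_map.
under eq_bigr => k _ do rewrite blk_sum.
rewrite (seq_pick (fun k => (if odd k then mm k 0 else 0) * (0%R == J) +
   \sum_(t <- enum 'I_r.+1) aa k t * ((t == J) + ((- t)%R == J)))) ?iota_uniq //.
rewrite mem_iota; case: (boolP (1 <= K < 1 + n)) => hK; last first.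
  by rewrite mul0n; symmetry; apply: mm_out => //; lia.
rewrite mul1n.
under eq_bigr => t _ do rewrite eqr_oppLR.
rewrite enum_pick2.
have hj : (J : nat) < r.+1 by [].
case: (J =P 0%R) => [->|nJ].
  rewrite oppr0 eqxx muln1 /aa /= ?eqxx.
  case: (boolP (odd K)) => oK.
    by rewrite !addn0.
  by rewrite add0n half_even // c1.
have j0 : (J : nat) != 0 by apply: contra_not_neq nJ => h; apply: val_inj.
have -> : (0%R == J) = false by apply/eqP => h; apply: nJ.
rewrite muln0 add0n.
have vJ : nat_of_ord (- J)%R = r.+1 - J by rewrite /= modn_small; lia.
rewrite /aa vJ (negbTE j0).
have -> : (r.+1 - J == 0) = false by apply/eqP; lia.
case: (boolP ((J : nat).*2 == r.+1)) => h2.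
  have -> : ((r.+1 - J).*2 == r.+1) = true by apply/eqP; lia.
  have -> : r.+1 - J = J by lia.
  rewrite half_even //.
  have E2 : r.+1./2 = J by rewrite -[in LHS](eqP h2) doubleK.
  rewrite -E2.
  by apply: c3; rewrite -(eqP h2) odd_double.
have -> : ((r.+1 - J).*2 == r.+1) = false by apply/eqP; lia.
case: (boolP ((J : nat).*2 < r.+1)) => h3.
  have -> : ((r.+1 - J).*2 < r.+1) = false by apply/negbTE; lia.
  by rewrite addn0.
have -> : ((r.+1 - J).*2 < r.+1) = true by lia.
rewrite add0n /mm c2; last 2 first.
- lia.
- by lia.
by congr (count_mem _ (nth _ _ _)); lia.
Qed.

Lemma Bl_prop p : p \in Bl -> 0 < p.1 /\ (if odd p.1 then p.1 else p.1./2) < n.+1.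
Proof.
move/flattenP => [b /mapP[k kin ->] pin]; rewrite mem_iota in kin.
move: pin; rewrite mem_cat => /orP[].
  rewrite mem_nseq => /andP[hc /eqP ->] /=.
  by case: (odd k) hc => //= _; split; lia.
move/flattenP => [b' /mapP[t _ ->]]; rewrite mem_nseq => /andP[_ /eqP ->] /=.
rewrite odd_double doubleK; split; lia.
Qed.

Lemma p_decomp p : (if odd p.1 then p.1 else p.1./2) < n.+1 ->
  p.1 = \sum_(J < r.+1) \sum_(K < n.+1) K * gk K J p.
Proof.
case: p => L c /= hb; rewrite /gk /=.
case: (boolP (odd L)) => oL; [rewrite oL in hb * | rewrite (negbTE oL) in hb *].
  have e : forall (J : 'I_r.+1) (K : 'I_n.+1),
      (K : nat) * ((L == K) && (0%R == J)) = (0%R == J) * ((L == K) * K).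
    by move=> J K; case: (L == K); case: (0%R == J); rewrite ?muln0 ?mul0n ?mul1n ?muln1.
  under eq_bigr => J _ do under eq_bigr => K _ do rewrite e.
  under eq_bigr => J _ do rewrite -big_distrr /= (ord_pick (fun K => K)) //.
  by rewrite (fin_pick 0%R (fun _ => L)).
have e : forall (J : 'I_r.+1) (K : 'I_n.+1),
    (K : nat) * (((L./2 == K) && (c == J)) + ((L./2 == K) && ((- c)%R == J))) =
    (c == J) * ((L./2 == K) * K) + ((- c)%R == J) * ((L./2 == K) * K).
  by move=> J K; case: (L./2 == K); case: (c == J); case: ((- c)%R == J) => /=; lia.
under eq_bigr => J _ do under eq_bigr => K _ do rewrite e.
under eq_bigr => J _ do rewrite big_split -!big_distrr /= (ord_pick (fun K => K)) //.
rewrite big_split /= (fin_pick c (fun _ => L./2)) (fin_pick (- c)%R (fun _ => L./2)).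
by rewrite half_even.
Qed.

Lemma Bl_pos : all (fun p => 0 < p.1) Bl.
Proof. by apply/allP => p /Bl_prop []. Qed.

Lemma Bl_sum : sumn (map fst Bl) = n.
Proof.
rewrite sumnE big_map.
rewrite (eq_big_seq (fun p => \sum_(J < r.+1) \sum_(K < n.+1) K * gk K J p)); last first.
  by move=> p /Bl_prop [_ h2]; apply: p_decomp.
rewrite exchange_big /=.
under eq_bigr => J _ do rewrite exchange_big /=.
under eq_bigr => J _ do under eq_bigr => K _ do rewrite -big_distrr /=.
have e : forall (J : 'I_r.+1) (K : 'I_n.+1),
    (K : nat) * \sum_(p <- Bl) gk K J p = K * mm K J.
  move=> J K; case: (posnP K) => [->|K0]; first by rewrite !mul0n.
  by rewrite E_eq.
under eq_bigr => J _ do under eq_bigr => K _ do rewrite e.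
have e2 : forall J : 'I_r.+1, \sum_(K < n.+1) K * mm K J = sumn (nth [::] lam J).
  move=> J; rewrite (sumn_count (N := n.+1)) //.
  by apply/allP => x /(lam_mem (ltn_ord J)) /andP[_ h]; rewrite ltnS.
under eq_bigr => J _ do rewrite e2.
rewrite -Hsum sumnE big_map (big_nth [::]) Hsize big_mkord.
by [].
Qed.

Lemma backward : exists pi : Grn r.+1 n, cycle_type (gmul pi (gbar pi)) = lam.
Proof.
exists (zf n Bl, sigc Bl_sum).
set pi := (zf n Bl, sigc Bl_sum).
apply: (@eq_from_nth _ [::]); first by rewrite /cycle_type size_map size_iota Hsize.
move=> j; rewrite /cycle_type size_map size_iota => hj.
rewrite -/(cycle_type _) (ct_nth pi hj).
have Hs : sorted geq (nth [::] lam j).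
  by have := all_nthP [::] Hpart j; rewrite Hsize => /(_ hj) /andP[].
rewrite -[RHS](sorted_sort geq_trans' Hs).
apply/(perm_sortP geq_total geq_trans' geq_anti); apply: perm_eq_count => k.
rewrite -(count_sort geq) -(ct_nth pi hj) ct_count.
case: (posnP k) => [->|k0].
  have -> : count_mem 0 (nth [::] lam j) = 0.
    by apply/count_memPn/negP => /(lam_mem hj) /andP[].
  apply/eqP; rewrite cards_eq0; apply/eqP/setP => C; rewrite !inE.
  apply/negbTE/negP => /andP[/porbitsP[y ->]]; rewrite /Fkj => /andP[/eqP h _].
  by move: (card_porbit_neq0 (pi.2 * pi.2)%g y); rewrite h.
apply/eqP; rewrite -(eqn_pmul2l k0) -points_count (total_count Bl_pos).
under eq_bigr => p _ do rewrite Gk_gk.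
by rewrite -big_distrr /= E_eq.
Qed.

End Comb.

Unset Implicit Arguments.

Theorem proposition6p11 (r n : nat) (lam : seq (seq nat)) :
  (0 < r)%N -> rpartition r n lam ->
  ((exists pi : Grn r n, cycle_type (gmul pi (gbar pi)) = lam) <->
   [/\ (forall k : nat, ~~ odd k -> ~~ odd (count_mem k (nth [::] lam 0))),
       (forall t : nat, (1 <= t)%N -> (t.*2 < r)%N ->
          nth [::] lam t = nth [::] lam (r - t)) &
       (~~ odd r -> forall k : nat, ~~ odd (count_mem k (nth [::] lam r./2)))]).
Proof.
case: r => [//|r] _ /and3P[/eqP Hsize Hpart /eqP Hsum].
split.
  by move=> [pi <-]; exact: (forward pi).
by case=> c1 c2 c3; apply: backward.
Qed.
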